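(* Let $\mathbb{X}$ be a two-dimensional real Banach space, let $x\in S_{\mathbb{X}}$, $\epsilon\in[0,1)$, and let $y\in S_{\mathbb{X}}$ be such that $x\perp_B y$. Let $t_1=\inf\{t\in[0,1] : x\perp_D^{\epsilon}((1-t)x+ty)\}$ and $t_2=\inf\{t\in[0,1] : x\perp_D^{\epsilon}(-(1-t)x+ty)\}$, put $u_1=(1-t_1)x+t_1y$, $u_2=-(1-t_2)x+t_2y$, $v_1=u_1/\|u_1\|$, $v_2=u_2/\|u_2\|$. Let $S(x,\epsilon)=\{z\in S_{\mathbb{X}} : \inf_{\lambda\in\mathbb{R}}\|x+\lambda z\|=\sqrt{1-\epsilon^2}\}$. Then $S(x,\epsilon)=\{\pm v_1,\pm v_2\}$ if $\epsilon\in(0,1)$, and $S(x,\epsilon)=\{y'\in S_{\mathbb{X}} : x\perp_B y'\}$ if $\epsilon=0$.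
   Context: $S_{\mathbb{X}}$ is the unit sphere of $\mathbb{X}$. For $x,y\in\mathbb{X}$, $x\perp_B y$ (Birkhoff-James orthogonality) means $\|x+\lambda y\|\geq\|x\|$ for all $\lambda\in\mathbb{R}$. For $\epsilon\in[0,1)$, $x\perp_D^{\epsilon} y$ means $\|x+\lambda y\|\geq\sqrt{1-\epsilon^2}\,\|x\|$ for all $\lambda\in\mathbb{R}$. *)

(* Defs.v *)
From HB Require Import structures.
From mathcomp Require Import all_boot all_order all_algebra.
From mathcomp Require Import all_classical all_reals all_analysis.
Set Implicit Arguments. Unset Strict Implicit. Unset Printing Implicit Defensive.
Import Order.TTheory GRing.Theory Num.Theory.
Import numFieldNormedType.Exports.
Local Open Scope classical_set_scope.
Local Open Scope ring_scope.

Section Defs.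
Variables (R : realType) (V : normedModType R).

Definition dim_two : Prop :=
  exists e1 e2 : V, forall v : V, exists! p : R * R, v = p.1 *: e1 + p.2 *: e2.

Definition unit_sphere : set V := [set z : V | `|z| = 1].

Definition BJ_orth (x y : V) : Prop := forall l : R, `|x| <= `|x + l *: y|.

Definition D_orth (eps : R) (x y : V) : Prop :=
  forall l : R, Num.sqrt (1 - eps ^+ 2) * `|x| <= `|x + l *: y|.

Definition S_set (x : V) (eps : R) : set V :=
  [set z | `|z| = 1 /\ inf (range (fun l : R => `|x + l *: z|)) = Num.sqrt (1 - eps ^+ 2)].
End Defs.

(* Main.v *)
Require Import Defs.
From HB Require Import structures.
From mathcomp Require Import all_boot all_order all_algebra.
From mathcomp Require Import all_classical all_reals all_analysis.
From mathcomp Require Import ring lra.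
Import Order.TTheory GRing.Theory Num.Theory.
Import numFieldNormedType.Exports.
Local Open Scope classical_set_scope.
Local Open Scope ring_scope.

Set Implicit Arguments. Unset Strict Implicit. Unset Printing Implicit Defensive.
Section H.
Variables (R : realType) (V : normedModType R).

Implicit Types (x w : V).
Definition hh (x w : V) := inf (range (fun l : R => `|x + l *: w|)).

Lemma hh_has_inf x w : has_inf (range (fun l : R => `|x + l *: w|)).
Proof.
split; first by exists `|x + 0 *: w|; exists 0.
by exists 0 => _ [l _ <-].
Qed.

Lemma hh_lb x w l : hh x w <= `|x + l *: w|.
Proof. by apply: (ge_inf (hh_has_inf x w).2); exists l. Qed.

Lemma hh_glb x w c : (forall l, c <= `|x + l *: w|) -> c <= hh x w.
Proof.
move=> H; apply: lb_le_inf; first by exists `|x + 0 *: w|; exists 0.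
by move=> _ [l _ <-].
Qed.

Lemma hh_ge0 x w : 0 <= hh x w.
Proof. by apply: hh_glb. Qed.

Lemma hh_near x w e : 0 < e -> exists l, `|x + l *: w| < hh x w + e.
Proof.
move=> e0; have [_ [l _ <-] H] := inf_adherent e0 (hh_has_inf x w).
by exists l.
Qed.

Lemma hh_le_norm x w : hh x w <= `|x|.
Proof. by have := hh_lb x w 0; rewrite scale0r addr0. Qed.

Lemma hh_scale x w c : c != 0 -> hh x (c *: w) = hh x w.
Proof.
move=> c0; rewrite /hh; congr inf; apply/seteqP; split => _ [l _ <-].
  by exists (l * c) => //; rewrite scalerA.
by exists (l / c) => //; rewrite scalerA mulrVK // unitfE.
Qed.

Lemma hh_oppx x w : hh (- x) w = hh x w.
Proof.
rewrite /hh; congr inf; apply/seteqP; split => _ [l _ <-].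
  by exists (- l) => //; rewrite -normrN opprD scaleNr !opprK.
by exists (- l) => //; rewrite -normrN opprD scaleNr !opprK.
Qed.

End H.

Section Core.
Variables (R : realType) (V : normedModType R).
Variables (x y : V).
Hypotheses (hx : `|x| = 1) (hy : `|y| = 1) (hxy : BJ_orth x y).

Lemma E1 (l a b : R) : x + l *: (a *: x + b *: y) = (1 + l * a) *: x + (l * b) *: y.
Proof. by rewrite scalerDr !scalerA scalerDl scale1r addrA. Qed.

Lemma nfZ (k a b : R) : k *: (a *: x + b *: y) = (k * a) *: x + (k * b) *: y.
Proof. by rewrite scalerDr !scalerA. Qed.

Lemma decomp (a b c d : R) :
  a *: x + b *: y = (c *: x + d *: y) + ((a - c) *: x + (b - d) *: y).
Proof.
rewrite !scalerBl addrACA; congr (_ + _).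
  by rewrite addrC subrK.
by rewrite addrC subrK.
Qed.

Lemma pert (a b c d : R) :
  `|a *: x + b *: y| <= `|c *: x + d *: y| + `|a - c| + `|b - d|.
Proof.
rewrite (decomp a b c d); apply: (le_trans (ler_normD _ _)).
rewrite -addrA lerD2l; apply: (le_trans (ler_normD _ _)).
by rewrite !normrZ hx hy !mulr1.
Qed.

Lemma bj_coef (a b : R) : `|a| <= `|a *: x + b *: y|.
Proof.
have [->|a0] := eqVneq a 0; first by rewrite normr0.
have -> : a *: x + b *: y = a *: (x + (b / a) *: y).
  by rewrite scalerDr scalerA mulrCA mulfV // mulr1.
rewrite normrZ -{1}(mulr1 `|a|) ler_wpM2l // -hx; exact: hxy.
Qed.

Lemma coef_lb (a b : R) : `|a| + `|b| <= 3 * `|a *: x + b *: y|.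
Proof.
have h1 := bj_coef a b.
have h2 : `|b| <= `|a *: x + b *: y| + `|a|.
  have := pert 0 b a b; rewrite scale0r add0r normrZ hy mulr1 subrr normr0 addr0.
  by rewrite sub0r normrN.
lra.
Qed.

Definition g (t : R) := hh x ((1 - t) *: x + t *: y).

Lemma g_le1 t : g t <= 1.
Proof. by rewrite -hx; apply: hh_le_norm. Qed.

Lemma g_ge0 t : 0 <= g t.
Proof. exact: hh_ge0. Qed.

Lemma g1 : g 1 = 1.
Proof.
apply/eqP; rewrite eq_le g_le1 /=; apply: hh_glb => l.
by rewrite subrr scale0r add0r scale1r -hx; apply: hxy.
Qed.

Lemma g0 : g 0 = 0.
Proof.
apply/eqP; rewrite eq_le g_ge0 andbT.
have := hh_lb x ((1 - 0) *: x + 0 *: y) (-1).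
by rewrite /g subr0 scale1r scale0r addr0 scaleN1r subrr normr0.
Qed.

Lemma gE t l : `|x + l *: ((1 - t) *: x + t *: y)| = `|(1 + l * (1 - t)) *: x + (l * t) *: y|.
Proof. by rewrite E1. Qed.

Lemma g_lb t l : g t <= `|(1 + l * (1 - t)) *: x + (l * t) *: y|.
Proof. by rewrite -gE; apply: hh_lb. Qed.

Lemma near_g t e : 0 < e -> exists l, `|(1 + l * (1 - t)) *: x + (l * t) *: y| < g t + e.
Proof. by move=> /(hh_near x ((1 - t) *: x + t *: y))[l hl]; exists l; rewrite -gE. Qed.

Lemma neg_l t l : 0 <= t <= 1 -> `|(1 + l * (1 - t)) *: x + (l * t) *: y| < 1 -> l < 0.
Proof.
move=> /andP[t0 t1] hL; rewrite ltNge; apply/negP => l0.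
have := bj_coef (1 + l * (1 - t)) (l * t).
rewrite ger0_norm; last by nra.
move=> h; have : 1 <= 1 + l * (1 - t) by nra.
lra.
Qed.

Lemma lbl t l : 0 <= t <= 1 -> 1 <= `|(1 + l * (1 - t)) *: x + (l * t) *: y| + `|l|.
Proof.
move=> /andP[t0 t1].
have := pert 1 0 (1 + l * (1 - t)) (l * t).
rewrite scale1r scale0r addr0 hx.
have -> : 1 - (1 + l * (1 - t)) = - (l * (1 - t)) by ring.
have -> : 0 - l * t = - (l * t) by ring.
rewrite !normrN !normrM (ger0_norm t0) [`|1 - t|]ger0_norm; last by lra.
have -> : `|l| * (1 - t) = `|l| - `|l| * t by ring.
lra.
Qed.

Lemma key s t l : 0 <= s -> s < t -> t <= 1 -> l < 0 ->
  g s * (s - l * (t - s)) <= s * `|(1 + l * (1 - t)) *: x + (l * t) *: y|.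
Proof.
move=> s0 st t1 l0.
have D0 : 0 < s - l * (t - s) by nra.
pose mu := l * t / (s - l * (t - s)).
have := g_lb s mu.
have -> : (1 + mu * (1 - s)) *: x + (mu * s) *: y =
   (s / (s - l * (t - s))) *: ((1 + l * (1 - t)) *: x + (l * t) *: y).
  rewrite nfZ; congr (_ *: x + _ *: y); rewrite /mu; field; lra.
rewrite normrZ ger0_norm; last by apply: divr_ge0; lra.
rewrite mulrC mulrA -ler_pdivlMr //.
by rewrite [s * _]mulrC.
Qed.

Lemma lip s t : 0 <= s <= 1 -> 0 <= t <= 1 -> g s <= g t + 14 * `|s - t|.
Proof.
move=> /andP[s0 s1] /andP[t0 t1].
apply/ler_addgt0Pr => e e0.
have [e1|e1] := leP 1 e.
  have := g_le1 s; have := g_ge0 t; have := normr_ge0 (s - t); lra.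
have [l hl] := near_g t e0.
have hb := coef_lb (1 + l * (1 - t)) (l * t).
have hl7 : `|l| <= `|1 + l * (1 - t)| + `|l * t| + 1.
  rewrite {1}(_ : l = (1 + l * (1 - t)) + l * t - 1); last by ring.
  apply: (le_trans (ler_normB _ _)); rewrite normr1 lerD2r; exact: ler_normD.
have := pert (1 + l * (1 - s)) (l * s) (1 + l * (1 - t)) (l * t).
have -> : (1 + l * (1 - s)) - (1 + l * (1 - t)) = l * (t - s) by ring.
have -> : l * s - l * t = - (l * (t - s)) by ring.
rewrite normrN normrM (distrC t s).
have := g_lb s l; have := g_le1 t; have := normr_ge0 (s - t); have := normr_ge0 l.
nra.
Qed.

Lemma mono s t : 0 <= s -> s <= t -> t <= 1 -> g s <= g t.
Proof.
move=> s0; rewrite le_eqVlt => /orP[/eqP -> //|st] t1.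
have [G1|G1] := leP 1 (g t); first by apply: le_trans G1; apply: g_le1.
rewrite leNgt; apply/negP => gst.
have e0 : 0 < g s - g t by lra.
have [l hl] := near_g t e0.
have hl' : `|(1 + l * (1 - t)) *: x + (l * t) *: y| < g s by lra.
have l0 : l < 0.
  apply: (neg_l (t := t)); first by apply/andP; split; lra.
  by have := g_le1 s; lra.
have hk := key s0 st t1 l0.
have := g_ge0 t => gt0.
set L := `|(1 + l * (1 - t)) *: x + (l * t) *: y| in hl' hk.
have e2 : s * L <= s * g s by nra.
have e3 : 0 < g s * (- l) by nra.
have e4 : 0 < g s * (- l) * (t - s) by nra.
nra.
Qed.

Lemma strict s t : 0 <= s -> s < t -> t <= 1 -> 0 < g t -> g t < 1 -> g s < g t.
Proof.
move=> s0 st t1 G0 G1; rewrite ltNge; apply/negP => h.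
pose dl := g t * (1 - g t) * (t - s) / 2.
have dlE : 2 * dl = g t * (1 - g t) * (t - s) by rewrite /dl; field.
have dl0 : 0 < dl.
  have : 0 < g t * (1 - g t) by nra.
  move=> p; have : 0 < g t * (1 - g t) * (t - s) by nra.
  lra.
have dl1 : dl <= (1 - g t) / 2.
  have : g t * (t - s) <= 1 by nra.
  move=> p; have : g t * (1 - g t) * (t - s) <= 1 - g t by nra.
  lra.
have [l hl] := near_g t dl0.
have tt : 0 <= t <= 1 by apply/andP; split; lra.
have l0 : l < 0 by apply: (neg_l tt); lra.
have hlb := lbl l tt.
rewrite ltr0_norm // in hlb.
have hk := key s0 st t1 l0.
set L := `|(1 + l * (1 - t)) *: x + (l * t) *: y| in hl hlb hk.
have D0 : 0 < s - l * (t - s) by nra.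
have e1 : g t * (s - l * (t - s)) <= g s * (s - l * (t - s)) by nra.
have e2 : s * L <= s * (g t + dl) by nra.
have e3 : - g t * l * (t - s) <= dl by nra.
have e4 : (1 - g t) / 2 < - l by lra.
have e5 : g t * (t - s) * ((1 - g t) / 2) < g t * (t - s) * (- l).
  have p : 0 < g t * (t - s) by nra.
  by rewrite ltr_pM2l.
nra.
Qed.

Lemma small2 (a b : R) : 0 < a -> 0 < b -> exists e : R, [/\ 0 < e, e <= a & e <= b].
Proof.
move=> a0 b0; have [ab|ab] := leP a b; first by exists a.
by exists b; split => //; apply: ltW.
Qed.

Lemma T_spec (d : R) : 0 < d -> d < 1 ->
  let A := [set t : R | 0 <= t <= 1 /\ d <= g t] in
  [/\ 0 <= inf A, inf A <= 1, g (inf A) = d &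
      forall t, 0 <= t <= 1 -> g t = d -> t = inf A].
Proof.
move=> d0 d1 A.
have A1 : A 1 by split; rewrite ?g1 ?lexx ?ler01 //; lra.
have An : A !=set0 by exists 1.
have Alb : lbound A 0 by move=> t [/andP[]].
have hA : has_lbound A by exists 0.
have T0 : 0 <= inf A by apply: lb_le_inf.
have T1 : inf A <= 1 by apply: (ge_inf hA).
have ge : d <= g (inf A).
  rewrite leNgt; apply/negP => gT.
  have Tlt1 : inf A < 1.
    rewrite lt_neqAle T1 andbT; apply/negP => /eqP TE.
    by move: gT; rewrite TE g1; lra.
  have a0 : 0 < 1 - inf A by lra.
  have b0 : 0 < (d - g (inf A)) / 28 by lra.
  have [e [e0 e1 e2]] := small2 a0 b0.
  have iel : inf A < inf A + e by lra.
  have [a Aa ae] := inf_lt An iel.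
  have s01 : 0 <= inf A + e <= 1 by apply/andP; split; lra.
  have t01 : 0 <= inf A <= 1 by apply/andP; split; lra.
  have := lip s01 t01.
  rewrite addrAC subrr add0r ger0_norm; last by lra.
  move=> hl.
  case: Aa => /andP[a0' a1] da.
  have hle : inf A + e <= 1 by lra.
  have := mono a0' (ltW ae) hle.
  lra.
have le : g (inf A) <= d.
  rewrite leNgt; apply/negP => gT.
  have Tgt0 : 0 < inf A.
    rewrite lt_neqAle T0 andbT; apply/negP => /eqP TE.
    by move: gT; rewrite -TE g0; lra.
  have b0 : 0 < (g (inf A) - d) / 28 by lra.
  have [e [e0 e1 e2]] := small2 Tgt0 b0.
  have s01 : 0 <= inf A <= 1 by apply/andP; split; lra.
  have t01 : 0 <= inf A - e <= 1 by apply/andP; split; lra.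
  have := lip s01 t01.
  rewrite opprB addrCA subrr addr0 ger0_norm; last by lra.
  move=> hl.
  have Ae : A (inf A - e) by split; [apply/andP; split|]; lra.
  have := ge_inf hA Ae; lra.
have gTd : g (inf A) = d by apply/eqP; rewrite eq_le le ge.
split => // t /andP[t0 t1] gt.
have At : A t by split; [apply/andP|]; rewrite ?gt ?lexx.
have Tt := ge_inf hA At.
apply/eqP; rewrite eq_le Tt andbT leNgt; apply/negP => Tlt.
have gt0 : 0 < g t by lra.
have gt1 : g t < 1 by lra.
have := strict T0 Tlt t1 gt0 gt1.
lra.
Qed.

End Core.

Section Span.
Variables (R : realType) (V : normedModType R).

Lemma lin (u v : V) (k m a b c d : R) :
  k *: (a *: u + b *: v) + m *: (c *: u + d *: v) = (k * a + m * c) *: u + (k * b + m * d) *: v.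
Proof. by rewrite !scalerDr !scalerA addrACA -!scalerDl. Qed.

Lemma indep (x y : V) : `|x| = 1 -> `|y| = 1 -> BJ_orth x y ->
  forall a b : R, a *: x + b *: y = 0 -> a = 0 /\ b = 0.
Proof.
move=> hx hy hxy a b H.
have := bj_coef hx hxy a b; rewrite H normr0 => ha.
have a0 : a = 0 by apply/eqP; rewrite -normr_le0.
split => //; move: H; rewrite a0 scale0r add0r => /(congr1 (fun w : V => `|w|)).
rewrite normrZ hy mulr1 normr0 => /eqP; by rewrite normr_eq0 => /eqP.
Qed.

Lemma span (x y : V) : dim_two V -> `|x| = 1 -> `|y| = 1 -> BJ_orth x y ->
  forall v : V, exists a b : R, v = a *: x + b *: y.
Proof.
move=> [e1 [e2 he]] hx hy hxy v.
have [[p1 p2] [/= xE _]] := he x.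
have [[q1 q2] [/= yE _]] := he y.
have [[r1 r2] [/= vE _]] := he v.
have [det0|det0] := eqVneq (p1 * q2 - p2 * q1) 0.
  have h1 : q2 *: x + (- p2) *: y = 0.
    rewrite xE yE lin.
    have -> : q2 * p1 + - p2 * q1 = 0 by rewrite -det0; ring.
    have -> : q2 * p2 + - p2 * q2 = 0 by ring.
    by rewrite !scale0r addr0.
  have h2 : q1 *: x + (- p1) *: y = 0.
    rewrite xE yE lin.
    have -> : q1 * p1 + - p1 * q1 = 0 by ring.
    have -> : q1 * p2 + - p1 * q2 = 0 by rewrite -oppr0 -det0; ring.
    by rewrite !scale0r addr0.
  have [_ /eqP] := indep hx hy hxy h1; rewrite oppr_eq0 => /eqP p20.
  have [_ /eqP] := indep hx hy hxy h2; rewrite oppr_eq0 => /eqP p10.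
  by move: hx; rewrite xE p10 p20 !scale0r addr0 normr0 => /eqP; rewrite eq_sym oner_eq0.
exists ((r1 * q2 - r2 * q1) / (p1 * q2 - p2 * q1)).
exists ((p1 * r2 - p2 * r1) / (p1 * q2 - p2 * q1)).
rewrite vE xE yE lin; congr (_ *: e1 + _ *: e2); field; exact: det0.
Qed.

End Span.

Lemma unit_dir (R : realType) (V : normedModType R) (u z : V) (k : R) :
  0 < k -> z = k *: u -> `|z| = 1 -> z = `|u|^-1 *: u.
Proof.
move=> k0 -> ; rewrite normrZ gtr0_norm // => h.
have k0' : k != 0 by rewrite gt_eqF.
have nu : `|u| = k^-1 by apply: (mulfI k0'); rewrite h mulfV.
by rewrite nu invrK.
Qed.

Lemma norm_v (R : realType) (V : normedModType R) (u : V) :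
  0 < `|u| -> `| `|u|^-1 *: u| = 1.
Proof.
move=> u0; rewrite normrZ ger0_norm ?invr_ge0 ?normr_ge0 // mulVf //.
by rewrite gt_eqF.
Qed.

Theorem theorem2p2 (R : realType) (V : normedModType R) (hdim : dim_two V)
  (x y : V) (eps : R) (hx : `|x| = 1) (hy : `|y| = 1)
  (heps0 : 0 <= eps) (heps1 : eps < 1) (hxy : BJ_orth x y) :
  let t1 := inf [set t : R | 0 <= t <= 1 /\ D_orth eps x ((1 - t) *: x + t *: y)] in
  let t2 := inf [set t : R | 0 <= t <= 1 /\ D_orth eps x (- ((1 - t) *: x) + t *: y)] in
  let u1 := (1 - t1) *: x + t1 *: y in
  let u2 := - ((1 - t2) *: x) + t2 *: y in
  let v1 := `|u1|^-1 *: u1 in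
  let v2 := `|u2|^-1 *: u2 in
  (0 < eps -> S_set x eps = [set z | z = v1 \/ z = - v1 \/ z = v2 \/ z = - v2]) /\
  (eps = 0 -> S_set x eps = [set y' | `|y'| = 1 /\ BJ_orth x y']).
Proof.
move=> t1 t2 u1 u2 v1 v2.
set d := Num.sqrt (1 - eps ^+ 2).
have hx' : `|-x| = 1 by rewrite normrN.
have hxy' : BJ_orth (-x) y.
  move=> l; rewrite normrN (_ : -x + l *: y = -(x + (-l) *: y)).
    by rewrite normrN; apply: hxy.
  by rewrite opprD scaleNr opprK.
have DE : forall w, D_orth eps x w <-> d <= hh x w.
  move=> w; split => [H|H l].
    by apply: hh_glb => l; have := H l; rewrite hx mulr1.
  by rewrite hx mulr1; apply: le_trans H (hh_lb _ _ _).
split; last first.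
  move=> e0; rewrite /S_set /d e0 expr2 mul0r subr0 sqrtr1.
  apply/seteqP; split => z [zn hz]; split => //.
    by move=> l; rewrite hx; rewrite -/(hh x z) -hz; apply: hh_lb.
  apply/eqP; rewrite eq_le; apply/andP; split.
    by rewrite -hx; apply: hh_le_norm.
  by apply: hh_glb => l; rewrite -hx; apply: hz.
move=> epos.
have d0 : 0 < d by rewrite /d sqrtr_gt0; nra.
have d1 : d < 1.
  have : d < Num.sqrt 1 by rewrite /d ltr_sqrt //; nra.
  by rewrite sqrtr1.
have t1E : t1 = inf [set t : R | 0 <= t <= 1 /\ d <= g x y t].
  rewrite /t1; congr inf; apply/seteqP; split => t [h1 h2]; split => //.
    exact/DE.
  exact/DE.
have u2E : u2 = (1 - t2) *: (-x) + t2 *: y by rewrite /u2 scalerN.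
have t2E : t2 = inf [set t : R | 0 <= t <= 1 /\ d <= g (-x) y t].
  rewrite /t2; congr inf; apply/seteqP; split => t [h1 h2]; split => //.
    by rewrite /g hh_oppx scalerN; apply/DE.
  by apply/DE; move: h2; rewrite /g hh_oppx scalerN.
have := T_spec hx hy hxy d0 d1 => /= [[T10 T11 gT1 uT1]].
have := T_spec hx' hy hxy' d0 d1 => /= [[T20 T21 gT2 uT2]].
rewrite -t1E in T10 T11 gT1 uT1.
rewrite -t2E in T20 T21 gT2 uT2.
have nu1 : 0 < `|u1|.
  have := coef_lb hx hy hxy (1 - t1) t1.
  rewrite (ger0_norm T10) ger0_norm; last by lra.
  rewrite -/u1; lra.
have nu2 : 0 < `|u2|.
  have := coef_lb hx' hy hxy' (1 - t2) t2.
  rewrite (ger0_norm T20) ger0_norm; last by lra.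
  rewrite -u2E; lra.
have hu1 : hh x u1 = d by exact: gT1.
have hu2 : hh x u2 = d by rewrite u2E -hh_oppx; exact: gT2.
have pos : forall z : V, `|z| = 1 -> hh x z = d -> forall a b : R,
    z = a *: x + b *: y -> 0 < b -> z = v1 \/ z = v2.
  move=> z zn hz a b zE b0.
  have [a0|a0] := leP 0 a.
    left; pose k := a + b; pose t := b / k.
    have k0 : 0 < k by rewrite /k; lra.
    have zk : z = k *: ((1 - t) *: x + t *: y).
      rewrite zE scalerDr !scalerA; congr (_ *: x + _ *: y); rewrite /t /k; field;
      by rewrite gt_eqF.
    have t01 : 0 <= t <= 1.
      apply/andP; split; first by rewrite /t; apply: divr_ge0; lra.
      by rewrite /t ler_pdivrMr // mul1r /k; lra.
    have gt : g x y t = d.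
      by rewrite /g -(@hh_scale _ _ x _ k) ?gt_eqF // -zk.
    have tt1 := uT1 t t01 gt.
    apply: (unit_dir k0 _ zn); rewrite zk tt1 //.
  right; pose k := b - a; pose t := b / k.
  have k0 : 0 < k by rewrite /k; lra.
  have zk : z = k *: ((1 - t) *: (-x) + t *: y).
    rewrite zE.
    have -> : a *: x = (-a) *: (-x) by rewrite scalerN scaleNr opprK.
    rewrite scalerDr !scalerA; congr (_ *: (-x) + _ *: y); rewrite /t /k; field;
    by rewrite gt_eqF.
  have t01 : 0 <= t <= 1.
    apply/andP; split; first by rewrite /t; apply: divr_ge0; lra.
    by rewrite /t ler_pdivrMr // mul1r /k; lra.
  have gt : g (-x) y t = d.
    by rewrite /g hh_oppx -(@hh_scale _ _ x _ k) ?gt_eqF // -zk.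
  have tt2 := uT2 t t01 gt.
  apply: (unit_dir k0 _ zn); rewrite zk tt2 u2E //.
apply/seteqP; split.
  move=> z [zn hz].
  have hz' : hh x z = d by exact: hz.
  have [a [b zE]] := span hdim hx hy hxy z.
  have [b0|b0] := ltP 0 b.
    by case: (pos z zn hz' a b zE b0) => ->; [left|right; right; left].
  have [bz|bn] := eqVneq b 0.
    move: zE; rewrite bz scale0r addr0 => zE.
    have a0 : a != 0 by apply/eqP => a0; move: zn; rewrite zE a0 scale0r normr0 => /eqP; rewrite eq_sym oner_eq0.
    move: hz'; rewrite zE hh_scale // => hxx.
    have : hh x x <= 0.
      by have := hh_lb x x (-1); rewrite scaleN1r subrr normr0.
    lra.
  have b0' : 0 < - b by rewrite oppr_gt0 lt_neqAle bn b0.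
  have zn' : `|- z| = 1 by rewrite normrN.
  have hz2 : hh x (- z) = d by rewrite -scaleN1r hh_scale // oppr_eq0 oner_eq0.
  have zE' : - z = (- a) *: x + (- b) *: y by rewrite zE opprD !scaleNr.
  case: (pos (- z) zn' hz2 (- a) (- b) zE' b0') => /(congr1 -%R); rewrite opprK => ->.
    by right; left.
  by right; right; right.
have v1n : `|v1| = 1 by exact: norm_v.
have v2n : `|v2| = 1 by exact: norm_v.
have hv1 : hh x v1 = d by rewrite /v1 hh_scale // invr_eq0 gt_eqF.
have hv2 : hh x v2 = d by rewrite /v2 hh_scale // invr_eq0 gt_eqF.
move=> z [->|[->|[->|->]]]; split; rewrite ?normrN //.
all: rewrite -/(hh x _).
all: try by [].
all: rewrite -scaleN1r hh_scale // oppr_eq0 oner_eq0.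
Qed.
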